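(* The relation $\le$ on isomorphism classes of codes, defined by $[\mathcal{D}]\le[\mathcal{C}]$ if and only if some finite (possibly empty) sequence of operations takes $\mathcal{C}$ to a code isomorphic to $\mathcal{D}$, is a well-defined partial order on the set of isomorphism classes of codes.
   Context: A code is a subset $\mathcal{C}\subseteq 2^{[n]}$. For $\sigma\subseteq[n]$, $\mathrm{Tk}_{\mathcal{C}}(\sigma)=\{c\in\mathcal{C}\mid\sigma\subseteq c\}$; a trunk in $\mathcal{C}$ is a subset that is empty or of this form (a trunk is itself regarded as a code in $2^{[n]}$). A function $f:\mathcal{C}\to\mathcal{D}$ between codes is a morphism if preimages of trunks in $\mathcal{D}$ are trunks in $\mathcal{C}$; an isomorphism is a morphism with an inverse function that is also a morphism. An operation on a code $\mathcal{C}$ is either replacing $\mathcal{C}$ by its image $f(\mathcal{C})$ under some morphism $f$ with domain $\mathcal{C}$, or replacing $\mathcal{C}$ by one of its trunks. *)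

(* Defs.v *)
From mathcomp Require Import all_boot.
Unset Printing Implicit Defensive.

Record code := Code { cdim : nat; cwords : {set {set 'I_cdim}} }.

Definition Tk (n : nat) (C : {set {set 'I_n}}) (sigma : {set 'I_n}) : {set {set 'I_n}} :=
  [set c in C | sigma \subset c].

Definition is_trunk (n : nat) (C T : {set {set 'I_n}}) : Prop :=
  T = set0 \/ exists sigma : {set 'I_n}, T = Tk _ C sigma.

(* f : C -> D is a morphism (f is given as a function on 2^[n], only its
   restriction to C matters): f maps C into D, and preimages of trunks of D
   are trunks of C. *)
Arguments Code : clear implicits.
Definition is_morphism (C D : code) (f : {set 'I_(cdim C)} -> {set 'I_(cdim D)}) : Prop :=
  (forall c, c \in cwords C -> f c \in cwords D) /\
  (forall T, is_trunk _ (cwords D) T -> is_trunk _ (cwords C) [set c in cwords C | f c \in T]).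

Definition code_iso (C D : code) : Prop :=
  exists (f : {set 'I_(cdim C)} -> {set 'I_(cdim D)})
         (g : {set 'I_(cdim D)} -> {set 'I_(cdim C)}),
    [/\ is_morphism C D f, is_morphism D C g,
        (forall c, c \in cwords C -> g (f c) = c) &
        (forall d, d \in cwords D -> f (g d) = d)].

Inductive operation : code -> code -> Prop :=
| op_image (C D : code) (f : {set 'I_(cdim C)} -> {set 'I_(cdim D)}) :
    is_morphism C D f -> operation C (Code (cdim D) (f @: cwords C))
| op_trunk (C : code) (T : {set {set 'I_(cdim C)}}) :
    is_trunk _ (cwords C) T -> operation C (Code (cdim C) T).

Inductive reach : code -> code -> Prop :=
| reach_refl (C : code) : reach C C
| reach_step (C C' C'' : code) : operation C C' -> reach C' C'' -> reach C C''.

(* code_le D C  <->  [D] <= [C]: some finite sequence of operations takes C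
   to a code isomorphic to D. *)
Definition code_le (D C : code) : Prop :=
  exists E : code, reach C E /\ code_iso E D.

(* Main.v *)
Require Import Defs.
From mathcomp Require Import all_boot.
From mathcomp Require Import zify.

Lemma trunk_sub n (C T : {set {set 'I_n}}) : is_trunk n C T -> T \subset C.
Proof.
case=> [->|[s ->]]; first exact: sub0set.
by apply/subsetP => c; rewrite inE => /andP[].
Qed.

Definition trunks n (C : {set {set 'I_n}}) : {set {set {set 'I_n}}} :=
  [set T | (T == set0) || [exists s, T == Tk n C s]].

Arguments trunk_sub {n C T}.
Lemma trunksP n C T : reflect (is_trunk n C T) (T \in trunks n C).
Proof.
rewrite inE; apply: (iffP orP).
  case=> [/eqP->|/existsP[s /eqP->]]; [by left|by right; exists s].
case=> [->|[s ->]]; [by left|right; apply/existsP; exists s; exact/eqP].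
Qed.

Arguments trunksP {n C T}.
Lemma iso_refl C : code_iso C C.
Proof.
have M : is_morphism C C id.
  split=> // T Tt; have S := trunk_sub Tt.
  suff -> : [set c in cwords C | id c \in T] = T by [].
  apply/setP => c; rewrite inE /=; case cT: (c \in T); last by rewrite andbF.
  by rewrite (subsetP S _ cT).
by exists id, id.
Qed.

Lemma morph_comp C D E f g : is_morphism C D f -> is_morphism D E g ->
  is_morphism C E (g \o f).
Proof.
case=> fC fT [gD gT]; split=> [c cC|T Tt]; first exact/gD/fC.
have := fT _ (gT _ Tt).
suff -> : [set c in cwords C | (g \o f) c \in T] =
  [set c in cwords C | f c \in [set d in cwords D | g d \in T]] by [].
apply/setP => c; rewrite !inE; case cC: (c \in cwords C) => //=.
by rewrite (fC c cC).
Qed.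

Arguments morph_comp {C D E f g}.
Lemma iso_sym C D : code_iso C D -> code_iso D C.
Proof. by case=> f [g [? ? ? ?]]; exists g, f. Qed.

Arguments iso_sym {C D}.
Lemma iso_trans C D E : code_iso C D -> code_iso D E -> code_iso C E.
Proof.
case=> f [g [fM gM gf fg]] [f' [g' [fM' gM' gf' fg']]].
exists (f' \o f), (g \o g'); split.
- exact: morph_comp fM fM'.
- exact: morph_comp gM' gM.
- by move=> c cC /=; rewrite gf' ?gf //; case: fM => + _; apply.
- by move=> d dD /=; rewrite fg ?fg' //; case: gM' => + _; apply.
Qed.

Arguments iso_trans {C D E}.
Lemma reach_trans C D E : reach C D -> reach D E -> reach C E.
Proof.
elim=> // C0 C1 C2 o _ IH R; exact: reach_step o (IH R).
Qed.

Arguments reach_trans {C D E}.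
Section Img.
Variables (C D : code) (f : {set 'I_(cdim C)} -> {set 'I_(cdim D)}).
Hypothesis fM : is_morphism C D f.
Let W := f @: cwords C.

Lemma pre_img T : is_trunk _ W T ->
  is_trunk _ (cwords C) [set c in cwords C | f c \in T].
Proof.
case: fM => fC fT.
case=> [->|[s ->]].
  left; apply/setP => c; rewrite !inE; by rewrite andbF.
have := fT _ (or_intror (ex_intro _ s erefl)).
suff -> : [set c in cwords C | f c \in Tk _ W s] =
  [set c in cwords C | f c \in Tk _ (cwords D) s] by [].
apply/setP => c; rewrite !inE; case cC: (c \in cwords C) => //=.
by rewrite (fC c cC) imset_f.
Qed.

Lemma morph_img : is_morphism C (Code (cdim D) W) f.
Proof. split=> [c cC|T Tt]; [exact: imset_f | exact: pre_img]. Qed.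

Definition phi (T : {set {set 'I_(cdim D)}}) := [set c in cwords C | f c \in T].

Lemma phiK (T : {set {set 'I_(cdim D)}}) : T \subset W -> f @: phi T = T.
Proof.
move=> S; apply/setP => y; apply/imsetP/idP.
  by case=> c; rewrite inE => /andP[_ ?] ->.
move=> yT; have := subsetP S _ yT; case/imsetP=> c cC e.
by exists c => //; rewrite inE cC -e yT.
Qed.

Lemma tr_img : #|trunks _ W| = #|phi @: trunks _ W| /\
   phi @: trunks _ W \subset trunks _ (cwords C).
Proof.
split.
  symmetry; apply: card_in_imset => T1 T2 /trunksP/trunk_sub H1 /trunksP/trunk_sub H2 E.
  by rewrite -(phiK _ H1) -(phiK _ H2) E.
apply/subsetP => _ /imsetP[T /trunksP Tt ->]; apply/trunksP; exact: pre_img.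
Qed.

End Img.

Arguments pre_img {C D f}.
Arguments morph_img {C D f}.
Arguments phi {C D}.
Arguments phiK {C D f}.
Arguments tr_img {C D f}.
Definition sz (C : code) := #|cwords C|.
Definition tr (C : code) := #|trunks _ (cwords C)|.

Lemma op_mono C C' : operation C C' ->
  sz C' <= sz C /\ tr C' <= tr C /\ (sz C' = sz C -> tr C' = tr C -> code_iso C C').
Proof.
destruct 1 as [C D f fM|C T Tt].
- rewrite /sz /tr /=.
  have [E1 E2] := tr_img fM.
  split; first exact: leq_imset_card.
  split; first by rewrite E1; exact: subset_leq_card.
  move=> /eqP/imset_injP inj Et.
  have Eq : phi f @: trunks _ (f @: cwords C) = trunks _ (cwords C).
    by apply/eqP; rewrite eqEcard E2 -E1 Et leqnn.
  pose g d := odflt set0 [pick c in cwords C | f c == d].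
  have gf : forall c, c \in cwords C -> g (f c) = c.
    move=> c cC; rewrite /g; case: pickP => [c' /andP[c'C /eqP e]|/(_ c)] /=.
      exact: inj.
    by rewrite cC eqxx.
  have gW : forall d, d \in f @: cwords C -> g d \in cwords C /\ f (g d) = d.
    by move=> _ /imsetP[c cC ->]; rewrite gf.
  exists f, g; split => //; first exact: morph_img.
  split=> [d /gW[]//|T /trunksP]; rewrite -Eq => /imsetP[T' /trunksP T't ->].
  have S := trunk_sub T't.
  suff -> : [set d in f @: cwords C | g d \in phi f T'] = T' by [].
  apply/setP => d; rewrite !inE; case dW: (d \in f @: cwords C) => /=.
    by have [-> ->] := gW d dW.
  by apply/esym/negbTE; apply: contraFN dW; apply: (subsetP S).
  by move=> d /gW[].
- rewrite /sz /tr /=.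
  have S := trunk_sub Tt.
  have St : trunks _ T \subset trunks _ (cwords C).
    apply/subsetP => U /trunksP; case=> [->|[s ->]]; apply/trunksP; first by left.
    case: Tt => [->|[t ->]].
      by left; apply/setP => c; rewrite !inE.
    right; exists (s :|: t); apply/setP => c; rewrite !inE subUset.
    by case: (c \in cwords C); case: (s \subset c); case: (t \subset c).
  split; first exact: subset_leq_card.
  split; first exact: subset_leq_card.
  move=> Es _; have /eqP E : T == cwords C by rewrite eqEcard S Es leqnn.
  by rewrite E; case: C T Tt S St Es E => n W /= *; apply: iso_refl.
Qed.

Arguments op_mono {C C'}.
Lemma reach_mono C E : reach C E ->
  sz E <= sz C /\ tr E <= tr C /\ (sz E = sz C -> tr E = tr C -> code_iso C E).
Proof.
elim=> [C0|C0 C1 C2 o _ [a [b IH]]]; first by split=> //; split=> // _ _; exact: iso_refl.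
have [a' [b' H]] := op_mono o.
split; first exact: leq_trans a a'.
split; first exact: leq_trans b b'.
move=> e1 e2.
have e3 : sz C1 = sz C0 by apply/eqP; rewrite eqn_leq a'; rewrite -e1 a.
have e4 : tr C1 = tr C0 by apply/eqP; rewrite eqn_leq b'; rewrite -e2 b.
apply: iso_trans (H e3 e4) (IH _ _); congruence.
Qed.

Arguments reach_mono {C E}.
Lemma iso_reach C D : code_iso C D -> reach C D.
Proof.
case=> f [g [fM gM gf fg]].
have E : f @: cwords C = cwords D.
  apply/setP => d; apply/imsetP/idP.
    by case=> c cC ->; case: fM => + _; apply.
  move=> dD; exists (g d); last by rewrite fg.
  by case: gM => + _; apply.
apply: (reach_step C _ D (op_image C D f fM)).
rewrite E; case: D f g fM gM gf fg E => n W /= *; exact: reach_refl.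
Qed.

Arguments iso_reach {C D}.
Theorem proposition5p1 :
  (* isomorphism of codes is an equivalence relation (so classes make sense) *)
  ((forall C : code, code_iso C C) /\
   (forall C D : code, code_iso C D -> code_iso D C) /\
   (forall C D E : code, code_iso C D -> code_iso D E -> code_iso C E)) /\
  (* <= is well defined on isomorphism classes *)
  (forall C C' D D' : code, code_iso C C' -> code_iso D D' ->
     (code_le D C <-> code_le D' C')) /\
  (* reflexive *)
  (forall C : code, code_le C C) /\
  (* transitive *)
  (forall C D E : code, code_le E D -> code_le D C -> code_le E C) /\
  (* antisymmetric on classes *)
  (forall C D : code, code_le D C -> code_le C D -> code_iso C D).
Proof.
split; first by split; [exact: iso_refl|split; [move=> ? ?; exact: iso_sym|move=> ? ? ?; exact: iso_trans]].
split.
  move=> C C' D D' iC iD; split; case=> E [R iE].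
    exists E; split; last exact: iso_trans iE iD.
    exact: reach_trans (iso_reach (iso_sym iC)) R.
  exists E; split; last exact: iso_trans iE (iso_sym iD).
  exact: reach_trans (iso_reach iC) R.
split; first by move=> C; exists C; split; [exact: reach_refl|exact: iso_refl].
split.
  move=> C D E [X [RX iX]] [Y [RY iY]]; exists X; split => //.
  exact: reach_trans RY (reach_trans (iso_reach iY) RX).
move=> C D [Y [RY iY]] [X [RX iX]].
have [a [b H]] := reach_mono RY.
have [a1 [b1 _]] := reach_mono (iso_reach iY).
have [a2 [b2 _]] := reach_mono (iso_reach (iso_sym iY)).
have [a3 [b3 _]] := reach_mono RX.
have [a4 [b4 _]] := reach_mono (iso_reach iX).
have [a5 [b5 _]] := reach_mono (iso_reach (iso_sym iX)).
have e1 : sz Y = sz C by lia.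
have e2 : tr Y = tr C by lia.
exact: iso_trans (H e1 e2) iY.
Qed.
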